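(* Let $w$ be an infinite word over the binary alphabet $\{0,1\}$. 1. If $w$ is of bounded width, then $w$ is weak abelian periodic. 2. There exists an infinite binary word of bounded width which is not bounded weak abelian periodic. 3. If $w$ is bounded weak abelian periodic, then $w$ is of bounded width.
   Context: For a finite word $u$ and a letter $a$, $|u|_a$ is the number of occurrences of $a$ in $u$, and for nonempty $u$ the frequency of $a$ in $u$ is $\rho_a(u)=|u|_a/|u|$. An infinite word $w$ over a finite alphabet $\Sigma$ is weak abelian periodic (WAP) if $w=v_0v_1v_2\cdots$ with $v_0$ a finite word and $v_1,v_2,\dots$ nonempty finite words such that $\rho_a(v_i)=\rho_a(v_j)$ for all $a\in\Sigma$ and all $i,j\ge 1$. It is bounded WAP if moreover such a factorization exists with $|v_i|\le C$ for all $i$, for some constant $C$. The graphic $g_w$ of a binary word $w=w_1w_2\cdots$ is the piecewise linear path in $\mathbb{R}^2$ starting at $(0,0)$ where the $n$-th step moves by the vector $(1,-1)$ if $w_n=0$ and by $(1,1)$ if $w_n=1$; thus $g_w$ is a function with $g_w(n)=|w_1\cdots w_n|_1-|w_1\cdots w_n|_0$ at integers, linear in between. A binary infinite word $w$ is of bounded width if there exist rational numbers $a,b_1,b_2$ with $ax+b_1\le g_w(x)\le ax+b_2$ for all $x\ge 0$. *)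

(* Defs.v *)
From Stdlib Require Import Reals.
From mathcomp Require Import all_boot all_order all_algebra.
From mathcomp Require Import Rstruct.
Set Implicit Arguments. Unset Strict Implicit. Unset Printing Implicit Defensive.
Import Order.TTheory GRing.Theory Num.Theory.
Local Open Scope ring_scope.

(* An infinite word w = w_1 w_2 ... over T is a function nat -> T,
   with (w k) the letter w_{k+1} (0-based indexing). *)

Definition occ {T : eqType} (w : nat -> T) (a : T) (m n : nat) : nat :=
  (\sum_(m <= k < n) (w k == a))%N.

Definition freq {T : eqType} (w : nat -> T) (a : T) (m n : nat) : rat :=
  (occ w a m n)%:R / (n - m)%:R.

(* A factorization w = v0 v1 v2 ... is encoded by cut points p :
   v0 = w[0, p 0), and v_{i+1} = w[p i, p (i+1)); nonemptiness of the v_i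
   (i >= 1) is strict increase of p. *)
Definition wap_factorization {T : finType} (w : nat -> T) (p : nat -> nat) : Prop :=
  (forall i, (p i < p i.+1)%N) /\
  (forall (a : T) (i j : nat), freq w a (p i) (p i.+1) = freq w a (p j) (p j.+1)).

Definition WAP {T : finType} (w : nat -> T) : Prop :=
  exists p, wap_factorization w p.

Definition bounded_WAP {T : finType} (w : nat -> T) : Prop :=
  exists p, wap_factorization w p /\ exists C : nat, forall i, (p i.+1 - p i <= C)%N.

(* binary words: true = letter 1, false = letter 0 *)
Definition step (b : bool) : R := if b then 1 else -1.

Definition gint (w : nat -> bool) (n : nat) : R := \sum_(k < n) step (w k).

(* the graphic g_w : piecewise linear interpolation, for x >= 0 *)
Definition graphic (w : nat -> bool) (x : R) : R :=
  let n := Num.truncn x in gint w n + (x - n%:R) * step (w n).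

Definition bounded_width (w : nat -> bool) : Prop :=
  exists a b1 b2 : rat, forall x : R, 0 <= x ->
    ratr a * x + ratr b1 <= graphic w x /\ graphic w x <= ratr a * x + ratr b2.

(* Main.v *)
Require Import Defs.
From Stdlib Require Import Reals Classical.
From mathcomp Require Import all_boot all_order all_algebra.
From mathcomp Require Import Rstruct.
From mathcomp Require Import zify ring lra.
Set Implicit Arguments. Unset Strict Implicit. Unset Printing Implicit Defensive.
Import Order.TTheory GRing.Theory Num.Theory.
Local Open Scope ring_scope.

Definition Gq (w : nat -> bool) (n : nat) : rat :=
  \sum_(k < n) (if w k then 1 else -1).

Lemma gintE w n : gint w n = ratr (Gq w n).
Proof.
rewrite /gint /Gq rmorph_sum; apply: eq_bigr => k _.
by case: (w k); rewrite /step /= ?rmorph1 ?rmorphN1.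
Qed.

Lemma graphicE w x : graphic w x =
  gint w (Num.truncn x) + (x - (Num.truncn x)%:R) * step (w (Num.truncn x)).
Proof. reflexivity. Qed.

Lemma graphic_nat w n : graphic w n%:R = gint w n.
Proof. by rewrite graphicE natrK subrr mul0r addr0. Qed.

Lemma Gq0 w : Gq w 0 = 0.
Proof. by rewrite /Gq big_ord0. Qed.

Lemma GqS w n : Gq w n.+1 = Gq w n + (if w n then 1 else -1).
Proof. by rewrite /Gq big_ord_recr. Qed.

Lemma occ_add (T : eqType) (w : nat -> T) (a : T) m d : occ w a m (m + d).+1 = (occ w a m (m + d) + (w (m + d) == a))%N.
Proof. by rewrite /occ big_nat_recr // leq_addr. Qed.

Lemma occ0 (T : eqType) (w : nat -> T) (a : T) m : occ w a m (m + 0) = 0%N.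
Proof. by rewrite /occ addn0 big_geq. Qed.

Lemma Gq_diff w m d :
  Gq w (m + d) = Gq w m + 2 * (occ w true m (m + d))%:R - d%:R.
Proof.
elim: d => [|d IH]; first by rewrite occ0 addn0 mulr0 subr0 addr0.
rewrite addnS GqS occ_add IH natrD -addn1 natrD.
case: (w (m + d)) => /=; rewrite ?addn0 ?natrD /=; ring.
Qed.

Lemma occ_tf w m n : (occ w true m n + occ w false m n)%N = (n - m)%N.
Proof.
rewrite /occ -big_split /=.
rewrite (eq_bigr (fun _ => 1%N)) ?sum_nat_const_nat ?muln1 //.
by move=> k _; case: (w k).
Qed.

Lemma occ_le w m d : (occ w true m (m + d) <= d)%N.
Proof. have := occ_tf w m (m + d); rewrite addKn => h. by rewrite -[X in (_ <= X)%N]h leq_addr. Qed.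

Lemma Gq_lip w m d : - d%:R <= Gq w (m + d) - Gq w m <= d%:R.
Proof.
rewrite Gq_diff; have := occ_le w m d.
rewrite -(ler_nat rat); set o := (occ _ _ _ _)%:R => ho.
have o0 : 0 <= o by rewrite /o ler0n.
apply/andP; split; lra.
Qed.

Lemma freq_slope w m d s : (0 < d)%N ->
  Gq w (m + d) = Gq w m + s * d%:R ->
  freq w true m (m + d) = (1 + s) / 2 /\ freq w false m (m + d) = (1 - s) / 2.
Proof.
move=> d0 H; rewrite /freq addKn.
have hf : occ w false m (m + d) = (d - occ w true m (m + d))%N.
  have := occ_tf w m (m + d); rewrite addKn => h. by rewrite -[X in (X - _)%N]h addKn.
have hle := occ_le w m d.
rewrite hf natrB //.
move: H; rewrite Gq_diff => H.
have dn0 : d%:R != 0 :> rat by rewrite pnatr_eq0 -lt0n.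
have ho : (occ w true m (m + d))%:R = (1 + s) / 2 * d%:R :> rat.
  lra.
rewrite ho; split; field; done.
Qed.

Lemma p_ge (p : nat -> nat) : (forall i, (p i < p i.+1)%N) -> forall i, (p 0 + i <= p i)%N.
Proof. move=> hp; elim=> [|i IH]; first by rewrite addn0. by rewrite addnS; apply: leq_ltn_trans (hp i). Qed.

Lemma cut (p : nat -> nat) : (forall i, (p i < p i.+1)%N) ->
  forall N, (p 0 <= N)%N -> exists i, (p i <= N < p i.+1)%N.
Proof.
move=> hp; elim=> [|N IH] h0.
  by exists 0%N; rewrite h0 /=; apply: leq_ltn_trans (hp 0%N).
case: (leqP (p 0%N) N) => hN.
  have [i /andP[h1 h2]] := IH hN.
  case: (ltngtP N.+1 (p i.+1)) => h3.
  - by exists i; rewrite h3 andbT; apply: leq_trans h1 _.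
  - move: h2 h3; clear; lia.
  - by exists i.+1; rewrite h3 leqnn hp.
have e : p 0%N = N.+1 by lia.
by exists 0%N; rewrite e leqnn -e hp.
Qed.

Lemma slope w p : wap_factorization w p ->
  exists s : rat, forall i, Gq w (p i) = Gq w (p 0%N) + s * ((p i)%:R - (p 0%N)%:R).
Proof.
case=> hp hf.
pose r := freq w true (p 0) (p 1); exists (2 * r - 1).
have step i : Gq w (p i.+1) = Gq w (p i) + (2 * r - 1) * (p i.+1 - p i)%:R.
  set d := (p i.+1 - p i)%N.
  have hd : p i.+1 = (p i + d)%N by rewrite /d subnKC // ltnW.
  have d0 : (0 < d)%N by rewrite /d subn_gt0.
  have fr : freq w true (p i) (p i + d) = r by rewrite -hd /r (hf true i 0%N).
  move: fr; rewrite /freq addKn => fr.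
  have dn0 : d%:R != 0 :> rat by rewrite pnatr_eq0 -lt0n.
  have ho : (occ w true (p i) (p i + d))%:R = r * d%:R :> rat.
    by rewrite -fr mulfVK.
  by rewrite hd Gq_diff ho; ring.
elim=> [|i IH]; first by rewrite subrr mulr0 addr0.
rewrite step IH natrB; last exact: ltnW.
ring.
Qed.

Lemma fin_lin (A N G t B1 B2 s : R) : A * t <= 1 + A * A -> - (1 + A * A) <= A * t ->
  0 <= t -> t <= 1 -> A * N + B1 <= G -> G <= A * N + B2 -> (s = 1 \/ s = -1) ->
  A * N + A * t + (B1 - 1 - 1 - A * A) <= G + t * s /\
  G + t * s <= A * N + A * t + (B2 + 1 + 1 + A * A).
Proof.
move=> h1 h2 h3 h4 h5 h6 [->|->]; split; lra.
Qed.

Lemma hA_bound (A t : R) : 0 <= t -> t <= 1 ->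
  A * t <= 1 + A * A /\ - (1 + A * A) <= A * t.
Proof.
move=> t0 t1.
case: (lerP 0 A) => hA.
  have : A * t <= A * 1 by rewrite ler_wpM2l.
  have : 0 <= A * t by rewrite mulr_ge0.
  have : 0 <= (A - 1) * (A - 1) by rewrite -expr2 sqr_ge0.
  move=> *; split; nra.
have : A * 1 <= A * t by rewrite ler_wnM2l // ltW.
have : A * t <= 0 by rewrite mulr_le0_ge0 // ltW.
have : 0 <= (A + 1) * (A + 1) by rewrite -expr2 sqr_ge0.
move=> *; split; nra.
Qed.

Lemma bw_of_int w (a b1 b2 : rat) :
  (forall n, a * n%:R + b1 <= Gq w n <= a * n%:R + b2) -> bounded_width w.
Proof.
move=> H; exists a, (b1 - 1 - 1 - a * a), (b2 + 1 + 1 + a * a) => x x0.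
rewrite graphicE gintE; set n := Num.truncn x.
have /andP[hn1 hn2] := truncn_itv x0.
have /andP[h1 h2] := H n.
rewrite -(ler_rat R) rmorphD rmorphM /= ratr_nat in h1.
rewrite -(ler_rat R) rmorphD rmorphM /= ratr_nat in h2.
have e1 : ratr (b1 - 1 - 1 - a * a) = ratr b1 - 1 - 1 - ratr a * ratr a :> R.
  by rewrite !rmorphB rmorphM !rmorph1.
have e2 : ratr (b2 + 1 + 1 + a * a) = ratr b2 + 1 + 1 + ratr a * ratr a :> R.
  by rewrite !rmorphD rmorphM !rmorph1.
rewrite e1 e2.
move: hn1 hn2; rewrite -/n -natr1 => hn1 hn2.
have t0 : 0 <= x - n%:R by rewrite subr_ge0.
have t1 : x - n%:R <= 1 by lra.
have [hA1 hA2] := hA_bound (ratr a) t0 t1.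
have -> : ratr a * x = ratr a * n%:R + ratr a * (x - n%:R) by rewrite -mulrDr addrC subrK.
move: hA1 hA2 t0 t1 h1 h2.
set t := x - n%:R; set A := ratr a; set N := n%:R; set G := ratr (Gq w n).
move=> hA1 hA2 t0 t1 h1 h2.
apply: fin_lin => //; rewrite /step; case: (w n); [left|right]; done.
Qed.

Lemma int_of_bw w : bounded_width w ->
  exists a b1 b2 : rat, forall n, a * n%:R + b1 <= Gq w n <= a * n%:R + b2.
Proof.
case=> a [b1 [b2 H]]; exists a, b1, b2 => n.
have := H n%:R (ler0n _ _); rewrite graphic_nat gintE.
have e : forall b, ratr a * n%:R + ratr b = ratr (a * n%:R + b) :> R.
  by move=> b; rewrite rmorphD rmorphM /= ratr_nat.
by rewrite !e !ler_rat => -[-> ->].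
Qed.

Lemma sx_bound (s x P : rat) : 0 <= x -> x <= P -> - (P * `|s|) <= s * x <= P * `|s|.
Proof.
move=> x0 xP; case: (lerP 0 s) => hs.
  rewrite ger0_norm //.
  have : s * x <= s * P by rewrite ler_wpM2l.
  have : 0 <= s * x by rewrite mulr_ge0.
  move=> *; apply/andP; split; nra.
rewrite ltr0_norm //.
have : s * P <= s * x by rewrite ler_wnM2l // ltW.
have : s * x <= 0 by rewrite mulr_le0_ge0 // ltW.
move=> *; apply/andP; split; nra.
Qed.

Lemma fin_case1 (g s n P S : rat) : - n <= g <= n -> 0 <= n -> n <= P ->
  - (P * S) <= s * n <= P * S ->
  s * n + - (P * (1 + S)) <= g <= s * n + P * (1 + S).
Proof. move=> /andP[h1 h2] h3 h4 /andP[h5 h6]; apply/andP; split; lra. Qed.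

Lemma fin_case2 (g0 gpi gn s p0 pi d c S : rat) :
  - p0 <= g0 <= p0 -> gpi = g0 + s * (pi - p0) -> - d <= gn - gpi <= d ->
  0 <= d -> d <= c -> - (p0 * S) <= s * p0 <= p0 * S -> - (c * S) <= s * d <= c * S ->
  s * (pi + d) + - ((p0 + c) * (1 + S)) <= gn <= s * (pi + d) + (p0 + c) * (1 + S).
Proof.
move=> /andP[h1 h2] h3 /andP[h4 h5] h6 h7 /andP[h8 h9] /andP[h10 h11].
rewrite h3 in h4 h5; apply/andP; split; lra.
Qed.

Lemma part3 w : bounded_WAP w -> bounded_width w.
Proof.
case=> p [hw [C hC]]; have [s hs] := slope hw; case: hw => hp _.
apply: (@bw_of_int w s (- (((p 0%N) + C)%:R * (1 + `|s|))) (((p 0%N) + C)%:R * (1 + `|s|))) => n.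
case: (ltnP n (p 0%N)) => hn.
  have := Gq_lip w 0 n; rewrite add0n Gq0 subr0 => hg.
  apply: (fin_case1 hg).
  - exact: ler0n.
  - by rewrite ler_nat; lia.
  - by apply: sx_bound; rewrite ?ler0n // ler_nat; lia.
have [i /andP[h1 h2]] := cut hp hn.
set d := (n - p i)%N.
have hnd : n = (p i + d)%N by rewrite /d subnKC.
have hdC : (d <= C)%N by have := hC i; rewrite /d; lia.
rewrite hnd !natrD.
apply: (fin_case2 (g0 := Gq w (p 0%N)) (gpi := Gq w (p i))).
- by have := Gq_lip w 0 (p 0%N); rewrite add0n Gq0 subr0.
- exact: hs.
- exact: Gq_lip.
- exact: ler0n.
- by rewrite ler_nat.
- by apply: sx_bound; rewrite ?ler0n.
- by apply: sx_bound; rewrite ?ler0n // ler_nat.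
Qed.

Lemma pigeon (M : nat) : forall (F : nat -> nat) (N0 : nat),
  (forall n, (N0 <= n)%N -> (F n <= M)%N) ->
  exists c, forall N, exists n, (N <= n)%N /\ F n = c.
Proof.
elim: M => [|M IH] F N0 H.
  exists 0%N => N; exists (maxn N N0); split; first exact: leq_maxl.
  by have := H (maxn N N0) (leq_maxr _ _); rewrite leqn0 => /eqP.
case: (classic (forall N, exists n, (N <= n)%N /\ F n = M.+1)) => hM.
  by exists M.+1.
have [N1 hN1] := not_all_ex_not _ _ hM.
apply: (IH F (maxn N0 N1)) => n hn.
have h1 := H n (leq_trans (leq_maxl _ _) hn).
have h2 : F n <> M.+1.
  by move=> e; apply: hN1; exists n; split => //; exact: leq_trans (leq_maxr _ _) hn.
lia.
Qed.

Definition Gi (w : nat -> bool) (n : nat) : int :=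
  \sum_(k < n) (if w k then 1 else -1).

Lemma GqGi w n : Gq w n = (Gi w n)%:~R.
Proof.
rewrite /Gq /Gi rmorph_sum; apply: eq_bigr => k _.
by case: (w k); rewrite ?rmorph1 ?rmorphN1.
Qed.

Lemma build (P : nat -> bool) : (forall N, exists n, (N <= n)%N /\ P n) ->
  exists p : nat -> nat, (forall i, (p i < p i.+1)%N) /\ (forall i, P (p i)).
Proof.
move=> H.
have H' : forall N, exists n, (N < n)%N && P n.
  by move=> N; have [n [h1 h2]] := H N.+1; exists n; rewrite h1 h2.
pose nxt N := xchoose (H' N).
exists (fun i => iter i.+1 nxt 0%N); split.
  by move=> i /=; have /andP[] := xchooseP (H' (iter i.+1 nxt 0%N)).
by move=> i /=; have /andP[] := xchooseP (H' (iter i nxt 0%N)).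
Qed.

Lemma part1 w : bounded_width w -> WAP w.
Proof.
move=> /int_of_bw [a [b1 [b2 H]]].
pose d := denq a; pose num := numq a.
pose Z n : int := d * Gi w n - num * n%:Z.
have d0 : (0 : rat) < d%:~R by rewrite ltr0z denq_gt0.
have ZE n : (Z n)%:~R = d%:~R * (Gq w n - a * n%:R) :> rat.
  rewrite /Z rmorphB !rmorphM /= /num numqE -pmulrn GqGi /d; ring.
pose lo := Num.floor (d%:~R * b1 : rat).
pose hi := Num.ceil (d%:~R * b2 : rat).
have hZ n : lo <= Z n <= hi.
  have /andP[h1 h2] := H n.
  apply/andP; split; rewrite -(ler_int rat).
    apply: le_trans (floor_le _) _; rewrite ZE.
    rewrite ler_pM2l //; lra.
  apply: le_trans (ceil_ge _); rewrite ZE.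
  rewrite ler_pM2l //; lra.
pose F n := `|Z n - lo|%N.
have FE n : (F n)%:Z = Z n - lo.
  by rewrite /F abszE ger0_norm // subr_ge0; have /andP[] := hZ n.
have [c hc] : exists c, forall N, exists n, (N <= n)%N /\ F n = c.
  apply: (@pigeon `|hi - lo|%N F 0%N) => n _.
  rewrite -lez_nat FE abszE ger0_norm; last first.
    by have /andP[h1 h2] := hZ n; rewrite subr_ge0; apply: le_trans h2.
  by have /andP[h1 h2] := hZ n; rewrite lerD2r.
have [p [hp hP]] := build (P := fun n => F n == c) (fun N => let: ex_intro n (conj h1 h2) := hc N in ex_intro _ n (conj h1 (introT eqP h2))).
have hE i : Gq w (p i) - a * (p i)%:R = (c%:Z + lo)%:~R / d%:~R.
  have : (Z (p i))%:~R = (c%:Z + lo)%:~R :> rat.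
    by rewrite -(eqP (hP i)) FE subrK.
  rewrite ZE => <-; field; lra.
exists p; split => //.
have hf i : freq w true (p i) (p i.+1) = (1 + a) / 2 /\ freq w false (p i) (p i.+1) = (1 - a) / 2.
  set e := (p i.+1 - p i)%N.
  have he : p i.+1 = (p i + e)%N by rewrite /e subnKC // ltnW.
  rewrite he; apply: freq_slope; first by rewrite /e subn_gt0.
  have := hE i.+1; rewrite -(hE i) he natrD => h; lra.
move=> b i j; case: b.
  by rewrite (hf i).1 (hf j).1.
by rewrite (hf i).2 (hf j).2.
Qed.

Definition tt_ (m : nat) : bool := odd (trunc_log 2 m.+1).

Definition wex (n : nat) : bool :=
  if odd n then tt_ (n./2).+1 && ~~ tt_ (n./2) else ~~ tt_ (n./2) || tt_ (n./2).+1.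

Lemma Gq_wex m : Gq wex (m.*2) = 2 * (tt_ m)%:R /\
  Gq wex (m.*2).+1 = 1 + 2 * (tt_ m && tt_ m.+1)%:R.
Proof.
have h1 k : Gq wex (k.*2).+1 = Gq wex (k.*2) + (if ~~ tt_ k || tt_ k.+1 then 1 else -1).
  by rewrite GqS /wex odd_double doubleK.
have h2 k : Gq wex (k.*2).+2 = Gq wex (k.*2).+1 + (if tt_ k.+1 && ~~ tt_ k then 1 else -1).
  by rewrite GqS /wex /= odd_double /= uphalf_double.
elim: m => [|m [IH1 IH2]].
  have e : tt_ 0 = false by rewrite /tt_ trunc_log1.
  have g0 : Gq wex 0.*2 = 0 by rewrite Gq0.
  by rewrite (h1 0%N) g0 e /=; split; ring.
split.
  by rewrite doubleS h2 IH2; case: (tt_ m); case: (tt_ m.+1) => /=; ring.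
rewrite h1 doubleS h2 IH2.
by case: (tt_ m); case: (tt_ m.+1); case: (tt_ m.+2) => /=; ring.
Qed.

Lemma Gq_wex_n n : Gq wex n =
  if odd n then 1 + 2 * (tt_ (n./2) && tt_ (n./2).+1)%:R else 2 * (tt_ (n./2))%:R.
Proof.
rewrite -{1}(odd_double_half n); case: (odd n) => /=.
  by rewrite add1n (Gq_wex _).2.
by rewrite add0n (Gq_wex _).1.
Qed.

Lemma Gq_wex_bound n : 0 <= Gq wex n <= 3.
Proof.
rewrite Gq_wex_n; case: (odd n); case: (tt_ _); case: (tt_ _) => /=;
  rewrite ?mulr0 ?mulr1 ?addr0 //.
Qed.

Lemma stretch N K (b : bool) : exists M, (N <= M)%N /\
  forall m, (M <= m <= M + K)%N -> tt_ m = b.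
Proof.
pose j := ((N + K).*2 + b)%N.
have hj : (N + K < 2 ^ j)%N.
  apply: leq_trans (ltn_expl _ (isT : (1 < 2)%N)); rewrite /j -addnn; lia.
exists (2 ^ j).-1; split; first by lia.
move=> m hm; rewrite /tt_.
have -> : trunc_log 2 m.+1 = j.
  apply: trunc_log_eq => //; rewrite expnS; move: hm hj.
  have : (0 < 2 ^ j)%N by rewrite expn_gt0.
  move: (2 ^ j)%N => P; lia.
rewrite /j oddD odd_double /=; clearbody j; by case: b.
Qed.

Lemma Gq_stretch M K b n : (forall m, (M <= m <= M + K)%N -> tt_ m = b) ->
  (M.*2 <= n <= M.*2 + K.*2)%N ->
  if b then 2 <= Gq wex n else Gq wex n <= 1.
Proof.
move=> ht hn; rewrite Gq_wex_n.
have hh := odd_double_half n.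
have e1 : tt_ n./2 = b by apply: ht; move: hn hh; case: (odd n) => /=; lia.
case ho: (odd n).
  have e2 : tt_ (n./2).+1 = b.
    by apply: ht; move: hn hh; rewrite ho /=; lia.
  by rewrite e1 e2; clear ht e1 e2; case: b.
by rewrite e1; clear ht e1; case: b.
Qed.

Lemma part2 : exists w : nat -> bool, bounded_width w /\ ~ bounded_WAP w.
Proof.
exists wex; split.
  apply: (@bw_of_int wex 0 0 3) => n; rewrite mul0r add0r add0r.
  exact: Gq_wex_bound.
case=> p [hw [C hC]]; have [s hs] := slope hw; case: hw => hp _.
have hpi := p_ge hp.
have s0 : s = 0.
  apply/eqP; apply: contraT => sn0.
  have sp : 0 < `|s| by rewrite normr_gt0.
  pose i := (Num.truncn (3 / `|s|)).+1.
  have hi : 3 / `|s| < i%:R by apply: truncnS_gt.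
  rewrite ltr_pdivrMr // in hi.
  have := hs i; rewrite -natrB; last by have := hpi i; lia.
  set D := (p i - p 0%N)%N.
  have hD : (i <= D)%N by have := hpi i; rewrite /D; lia.
  move=> e.
  have : `|Gq wex (p i) - Gq wex (p 0%N)| <= 3.
    have /andP[a1 a2] := Gq_wex_bound (p i).
    have /andP[a3 a4] := Gq_wex_bound (p 0%N).
    rewrite ler_norml; apply/andP; split; lra.
  rewrite e addrC addKr normrM (ger0_norm (ler0n _ _)).
  have : `|s| * i%:R <= `|s| * D%:R by rewrite ler_pM2l // ler_nat.
  rewrite mulrC in hi; lra.
pose c := Gq wex (p 0%N).
have hc i : Gq wex (p i) = c by rewrite hs s0 mul0r addr0.
have [M [hM ht]] := stretch (p 0%N) C (c < 2).
have h2M : (p 0%N <= M.*2)%N by lia.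
have [i /andP[h1 h2]] := cut hp h2M.
have hn : (M.*2 <= p i.+1 <= M.*2 + C.*2)%N by have := hC i; lia.
have := Gq_stretch ht hn; rewrite hc.
case hb: (c < 2) => h.
  by move: hb; rewrite ltNge h.
by move: hb; rewrite (le_lt_trans h) //; lra.
Qed.

Theorem proposition1 :
  (forall w : nat -> bool, bounded_width w -> WAP w) /\
  (exists w : nat -> bool, bounded_width w /\ ~ bounded_WAP w) /\
  (forall w : nat -> bool, bounded_WAP w -> bounded_width w).
Proof. split; [exact: part1 | split; [exact: part2 | exact: part3]]. Qed.
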